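(* Let $f(x|\eta)$, $\eta=(\theta,v,m)$, be the skew-normal kernel and let $\eta_1,\dots,\eta_{k_0}$ be distinct parameters with $v_j=\sigma_j^2>0$. The $4k_0$ functions $$\Big\{f(\cdot|\eta_j),\ \frac{\partial f}{\partial\theta}(\cdot|\eta_j),\ \frac{\partial f}{\partial v}(\cdot|\eta_j),\ \frac{\partial f}{\partial m}(\cdot|\eta_j):\ j=1,\dots,k_0\Big\}$$ are linearly dependent (as functions of $x\in\mathbb{R}$, almost everywhere) if and only if $P_1(\eta_1,\dots,\eta_{k_0})=0$ or $P_2(\eta_1,\dots,\eta_{k_0})=0$, where $$P_1=\prod_{j=1}^{k_0}m_j,\qquad P_2=\prod_{1\le i\neq j\le k_0}\Big\{(\theta_i-\theta_j)^2+\big[\sigma_i^2(1+m_j^2)-\sigma_j^2(1+m_i^2)\big]^2\Big\}.$$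
   Context: Skew-normal kernel: $f(x|\theta,v,m)=\frac{2}{\sigma}\varphi\!\left(\frac{x-\theta}{\sigma}\right)\Phi\!\left(\frac{m(x-\theta)}{\sigma}\right)$ with $\sigma=\sqrt v$, $\varphi,\Phi$ the standard normal density and cdf. An empty product equals $1$. *)

(* Defs.v *)
From Stdlib Require Import Reals Lra Lia.
Open Scope R_scope.

Definition gauss (s : R) : R := exp (- (s * s) / 2).

Lemma gauss_continuity : continuity gauss.
Proof. unfold gauss. reg. Qed.

Lemma gauss_integrable (a b : R) (h : a <= b) : Riemann_integrable gauss a b.
Proof.
  apply continuity_implies_RiemannInt; [exact h|].
  intros x _; apply gauss_continuity.
Qed.

Definition phi (t : R) : R := gauss t / sqrt (2 * PI).

(* standard normal cdf: Phi t = 1/2 + (1/sqrt(2 pi)) * int_0^t exp(-s^2/2) ds *)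
Definition Phi (t : R) : R :=
  match Rle_dec 0 t with
  | left h => / 2 + / sqrt (2 * PI) * RiemannInt (gauss_integrable 0 t h)
  | right h => / 2 - / sqrt (2 * PI) *
      RiemannInt (gauss_integrable t 0 (Rlt_le _ _ (Rnot_le_lt _ _ h)))
  end.

Definition skn (x theta v m : R) : R :=
  2 / sqrt v * phi ((x - theta) / sqrt v) * Phi (m * (x - theta) / sqrt v).

Fixpoint Rsum_upto (n : nat) (f : nat -> R) : R :=
  match n with O => 0 | S k => Rsum_upto k f + f k end.
Fixpoint Rprod_upto (n : nat) (f : nat -> R) : R :=
  match n with O => 1 | S k => Rprod_upto k f * f k end.

(* Lebesgue-null subset of R: coverable by countably many open intervals
   of arbitrarily small total length *)
Definition negligible (S : R -> Prop) : Prop :=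
  forall eps : R, 0 < eps ->
    exists a b : nat -> R,
      (forall n, a n <= b n) /\
      (forall x, S x -> exists n, a n < x < b n) /\
      (forall N, sum_f_R0 (fun n => b n - a n) N <= eps).

Definition P1 (k0 : nat) (m : nat -> R) : R := Rprod_upto k0 m.

Definition P2 (k0 : nat) (theta v m : nat -> R) : R :=
  Rprod_upto k0 (fun i => Rprod_upto k0 (fun j =>
    if Nat.eqb i j then 1 else
      (theta i - theta j) ^ 2
      + (v i * (1 + m j ^ 2) - v j * (1 + m i ^ 2)) ^ 2)).

(* Main.v *)
Require Import Defs.
From Stdlib Require Import Reals Lra Lia List Psatz Classical.
From Coquelicot Require Import Coquelicot.
Import ListNotations.
Open Scope R_scope.

Lemma gauss_cont_C (x : R) : continuous gauss x.
Proof. apply continuity_pt_filterlim. apply gauss_continuity. Qed.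

Lemma Phi_RInt t : Phi t = / 2 + / sqrt (2 * PI) * RInt gauss 0 t.
Proof.
  unfold Phi. destruct (Rle_dec 0 t) as [h|h].
  - rewrite RInt_Reals with (pr := gauss_integrable 0 t h). reflexivity.
  - rewrite <- RInt_Reals. rewrite <- (opp_RInt_swap gauss t 0).
    + unfold opp; simpl. ring.
    + apply ex_RInt_continuous. intros; apply gauss_cont_C.
Qed.

Lemma RInt_deriv t : derivable_pt_lim (RInt gauss 0) t (gauss t).
Proof.
  apply is_derive_Reals.
  apply (is_derive_RInt gauss (RInt gauss 0) 0 t).
  - apply filter_forall. intros b. apply (RInt_correct gauss 0 b). apply ex_RInt_continuous. intros; apply gauss_cont_C.
  - apply gauss_cont_C.
Qed.

Lemma Phi_deriv t : derivable_pt_lim Phi t (phi t).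
Proof.
  assert (H : derivable_pt_lim (fun t => / 2 + / sqrt (2 * PI) * RInt gauss 0 t) t (0 + / sqrt (2 * PI) * gauss t)).
  { apply derivable_pt_lim_plus. apply derivable_pt_lim_const.
    apply derivable_pt_lim_scal. apply RInt_deriv. }
  unfold phi. replace (gauss t / sqrt (2*PI)) with (0 + / sqrt (2 * PI) * gauss t) by (unfold Rdiv; ring).
  intros eps he. destruct (H eps he) as [d Hd]. exists d. intros h h0 hd.
  rewrite !Phi_RInt. apply Hd; auto.
Qed.

Lemma gauss_even y : gauss (- y) = gauss y.
Proof. unfold gauss. f_equal. field. Qed.

Lemma RInt_gauss_opp t : RInt gauss 0 (- t) = - RInt gauss 0 t.
Proof.
  assert (E := RInt_comp_lin gauss (-1) 0 0 t).
  replace (-1 * 0 + 0) with 0 in E by ring.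
  replace (-1 * t + 0) with (- t) in E by ring.
  rewrite <- E.
  2: { apply ex_RInt_continuous. intros; apply gauss_cont_C. }
  rewrite (RInt_ext _ (fun y => opp (gauss y))).
  - apply (RInt_opp (V:=R_CompleteNormedModule) gauss 0 t). apply ex_RInt_continuous. intros; apply gauss_cont_C.
  - intros x _. replace (-1 * x + 0) with (- x) by ring. rewrite gauss_even.
    unfold scal, opp; simpl. unfold mult; simpl. ring.
Qed.

Lemma s2pi_pos : 0 < sqrt (2 * PI).
Proof. apply sqrt_lt_R0. generalize PI_RGT_0; lra. Qed.

Lemma Phi_sym t : Phi (- t) = 1 - Phi t.
Proof. rewrite !Phi_RInt, RInt_gauss_opp. field. generalize s2pi_pos; lra. Qed.

Lemma phi_pos t : 0 < phi t.
Proof. unfold phi, gauss. apply Rdiv_lt_0_compat. apply exp_pos. apply s2pi_pos. Qed.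

Lemma phi_deriv t : is_derive phi t (- t * phi t).
Proof.
  unfold phi, gauss. auto_derive. auto. unfold Rdiv. field. generalize s2pi_pos; lra.
Qed.

Definition S4 t := 1/t - 1/t^3 + 3/t^5 - 15/t^7.

Lemma Phim_deriv t : is_derive (fun t => Phi (- t)) t (- phi t).
Proof.
  apply is_derive_Reals.
  replace (- phi t) with (phi (- t) * (-1)).
  2: { unfold phi. rewrite gauss_even. ring. }
  apply (derivable_pt_lim_comp (fun t => - t) Phi). 
  - apply derivable_pt_lim_opp. apply derivable_pt_lim_id.
  - apply Phi_deriv.
Qed.

Lemma S4_deriv t : 0 < t -> derivable_pt_lim S4 t (-1/t^2 + 3/t^4 - 15/t^6 + 105/t^8).
Proof.
  intros ht. apply is_derive_Reals. unfold S4. auto_derive.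
  - repeat split; apply Rgt_not_eq; unfold Rgt; repeat apply Rmult_lt_0_compat; lra.
  - field. lra.
Qed.

Lemma D_deriv t : 0 < t ->
  derivable_pt_lim (fun t => Phi (- t) - phi t * S4 t) t (- phi t * (105 / t^8)).
Proof.
  intros ht.
  assert (H := derivable_pt_lim_minus (fun t => Phi (-t)) (fun t => phi t * S4 t) t _ _
     (proj1 (is_derive_Reals _ _ _) (Phim_deriv t))
     (derivable_pt_lim_mult phi S4 t _ _ (proj1 (is_derive_Reals _ _ _) (phi_deriv t)) (S4_deriv t ht))).
  replace (- phi t * (105 / t^8)) with
    (- phi t - ((- t * phi t) * S4 t + phi t * (-1/t^2 + 3/t^4 - 15/t^6 + 105/t^8))).
  exact H. unfold S4. field. lra.
Qed.

Lemma E_deriv t : 0 < t ->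
  derivable_pt_lim (fun t => phi t * (S4 t + 105 / t^9) - Phi (- t)) t (- phi t * (945 / t^10)).
Proof.
  intros ht.
  assert (H9 : derivable_pt_lim (fun t => S4 t + 105 / t^9) t
     ((-1/t^2 + 3/t^4 - 15/t^6 + 105/t^8) + (- 945 / t^10))).
  { apply derivable_pt_lim_plus. apply S4_deriv; auto.
    apply is_derive_Reals. auto_derive. repeat split; apply Rgt_not_eq; unfold Rgt; repeat apply Rmult_lt_0_compat; lra. field. lra. }
  assert (H := derivable_pt_lim_minus (fun t => phi t * (S4 t + 105 / t^9)) (fun t => Phi (-t)) t _ _
     (derivable_pt_lim_mult phi _ t _ _ (proj1 (is_derive_Reals _ _ _) (phi_deriv t)) H9)
     (proj1 (is_derive_Reals _ _ _) (Phim_deriv t))).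
  replace (- phi t * (945 / t^10)) with
    ((- t * phi t) * (S4 t + 105/t^9) + phi t * ((-1/t^2 + 3/t^4 - 15/t^6 + 105/t^8) + (- 945 / t^10)) - - phi t).
  exact H. unfold S4. field. lra.
Qed.

Definition MDf t := Phi (- t) - phi t * S4 t.
Definition MEf t := phi t * (S4 t + 105 / t^9) - Phi (- t).

Lemma MDf_mono a b : 1 <= a -> a <= b -> MDf b <= MDf a.
Proof.
  intros ha hab. destruct (Req_dec a b) as [<-|hne]; [lra|].
  destruct (MVT_cor2 MDf (fun t => - phi t * (105 / t^8)) a b) as [c [Hc Hc2]]. lra.
  { intros c hc. apply D_deriv. lra. }
  assert (0 < phi c * (105 / c^8)).
  { apply Rmult_lt_0_compat. apply phi_pos. apply Rdiv_lt_0_compat. lra. apply pow_lt; lra. }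
  nra.
Qed.

Lemma MEf_mono a b : 1 <= a -> a <= b -> MEf b <= MEf a.
Proof.
  intros ha hab. destruct (Req_dec a b) as [<-|hne]; [lra|].
  destruct (MVT_cor2 MEf (fun t => - phi t * (945 / t^10)) a b) as [c [Hc Hc2]]. lra.
  { intros c hc. apply E_deriv. lra. }
  assert (0 < phi c * (945 / c^10)).
  { apply Rmult_lt_0_compat. apply phi_pos. apply Rdiv_lt_0_compat. lra. apply pow_lt; lra. }
  nra.
Qed.

Lemma DE_sum t : MDf t + MEf t = 105 * phi t / t^9.
Proof. unfold MDf, MEf. unfold Rdiv. ring. Qed.

Lemma cv_le (u : nat -> R) l X : Un_cv u l -> (exists N, forall n, (n >= N)%nat -> u n <= X) -> l <= X.
Proof.
  intros Hu [N HN]. destruct (Rle_dec l X) as [h|h]; auto. exfalso.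
  destruct (Hu (l - X)) as [N2 HN2]. lra.
  specialize (HN2 (max N N2) (Nat.le_max_r _ _)). specialize (HN (max N N2) (Nat.le_max_l _ _)).
  unfold Rdist in HN2. apply Rabs_def2 in HN2. lra.
Qed.

Lemma cv_ge (u : nat -> R) l X : Un_cv u l -> (exists N, forall n, (n >= N)%nat -> X <= u n) -> X <= l.
Proof.
  intros Hu [N HN]. destruct (Rle_dec X l) as [h|h]; auto. exfalso.
  destruct (Hu (X - l)) as [N2 HN2]. lra.
  specialize (HN2 (max N N2) (Nat.le_max_r _ _)). specialize (HN (max N N2) (Nat.le_max_l _ _)).
  unfold Rdist in HN2. apply Rabs_def2 in HN2. lra.
Qed.

Lemma big_nat t : exists N, forall n, (n >= N)%nat -> t <= INR n + 1.
Proof.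
  destruct (INR_archimed 1 t) as [N HN]. lra. exists N. intros n hn.
  apply le_INR in hn. lra.
Qed.

Lemma Mills : exists lam, forall t, 1 <= t ->
  0 <= Phi (- t) - lam - phi t * S4 t <= 105 * phi t / t^9.
Proof.
  set (u := fun n => - MDf (INR n + 1)).
  assert (Hg : Un_growing u).
  { intros n. unfold u; cbv beta. rewrite S_INR. assert (H := MDf_mono (INR n + 1) (INR n + 1 + 1)).
    assert (0 <= INR n) by apply pos_INR. lra. }
  assert (Hb : has_ub u).
  { exists (MEf 1). intros x [n ->]. unfold u.
    assert (0 <= INR n) by apply pos_INR.
    assert (H1 := MEf_mono 1 (INR n + 1)). assert (H2 := DE_sum (INR n + 1)).
    assert (0 < 105 * phi (INR n + 1) / (INR n + 1)^9).
    { apply Rdiv_lt_0_compat. generalize (phi_pos (INR n + 1)); lra. apply pow_lt; lra. }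
    lra. }
  destruct (growing_cv u Hg Hb) as [l Hl].
  exists (- l). intros t ht.
  assert (HD : - MDf t <= l).
  { apply (cv_ge u); auto. destruct (big_nat t) as [N HN]. exists N. intros n hn.
    unfold u; cbv beta. assert (H := MDf_mono t (INR n + 1) ht (HN n hn)). lra. }
  assert (HE : l <= MEf t).
  { apply (cv_le u); auto. destruct (big_nat t) as [N HN]. exists N. intros n hn.
    unfold u; cbv beta. assert (H := MEf_mono t (INR n + 1) ht (HN n hn)).
    assert (H2 := DE_sum (INR n + 1)).
    assert (0 < 105 * phi (INR n + 1) / (INR n + 1)^9).
    { apply Rdiv_lt_0_compat. generalize (phi_pos (INR n + 1)); lra. apply pow_lt. 
      assert (0 <= INR n) by apply pos_INR. lra. }
    lra. }
  assert (H2 := DE_sum t). replace (Phi (- t) - - l - phi t * S4 t) with (MDf t + l) by (unfold MDf; ring). lra.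
Qed.

Fixpoint peval (l : list R) (y : R) : R :=
  match l with nil => 0 | c :: l' => c + y * peval l' y end.

Lemma peval_zero l y : (forall c, In c l -> c = 0) -> peval l y = 0.
Proof.
  induction l; simpl; auto. intros H. rewrite (H a (or_introl eq_refl)), IHl. ring.
  intros; apply H; auto.
Qed.

Lemma const_small c K Y : (forall y, Y <= y -> Rabs c <= K / y) -> c = 0.
Proof.
  intros H. destruct (Req_dec c 0) as [h|h]; auto. exfalso.
  assert (hc : 0 < Rabs c) by (apply Rabs_pos_lt; auto).
  set (y := Rmax Y 1 + Rabs K / Rabs c + 1).
  assert (h1 : 1 <= Rmax Y 1) by apply Rmax_r.
  assert (h2 : Y <= Rmax Y 1) by apply Rmax_l.
  assert (h3 : 0 <= Rabs K / Rabs c) by (unfold Rdiv; apply Rmult_le_pos; [apply Rabs_pos|left; apply Rinv_0_lt_compat; auto]).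
  specialize (H y ltac:(unfold y; lra)).
  assert (hy : 0 < y) by (unfold y; lra).
  assert (K / y <= Rabs K / y) by (apply Rmult_le_compat_r; [left; apply Rinv_0_lt_compat; auto| apply Rle_abs]).
  assert (Rabs K / y < Rabs c).
  { apply (Rmult_lt_reg_r y); auto. unfold Rdiv. rewrite Rmult_assoc, Rinv_l by lra.
    assert (Rabs K < Rabs c * (Rabs K / Rabs c + 1)).
    { unfold Rdiv. rewrite Rmult_plus_distr_l, <- Rmult_assoc, (Rmult_comm (Rabs c)), Rmult_assoc, Rinv_r by lra. lra. }
    assert (Rabs c * (Rabs K / Rabs c + 1) <= Rabs c * y).
    { apply Rmult_le_compat_l; [lra|]. unfold y. lra. }
    lra. }
  lra.
Qed.

Lemma Pz1 l : (exists K Y, forall y, Y <= y -> Rabs (peval l y) <= K / y) ->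
  forall c, In c l -> c = 0.
Proof.
  induction l as [|c l IH]; [simpl; tauto|]. intros [K [Y H]].
  change (forall y, Y <= y -> Rabs (c + y * peval l y) <= K / y) in H.
  assert (Hl : forall c, In c l -> c = 0).
  { apply IH. exists (Rabs K + Rabs c), (Rmax Y 1). intros y hy.
    assert (h1 : 1 <= y) by (generalize (Rmax_r Y 1); lra).
    assert (h2 : Y <= y) by (generalize (Rmax_l Y 1); lra).
    specialize (H y h2).
    assert (HK : K / y <= Rabs K).
    { unfold Rdiv. apply (Rle_trans _ (Rabs K * / y)). apply Rmult_le_compat_r.
      left; apply Rinv_0_lt_compat; lra. apply Rle_abs.
      rewrite <- (Rmult_1_r (Rabs K)) at 2. apply Rmult_le_compat_l. apply Rabs_pos.
      rewrite <- Rinv_1. apply Rinv_le_contravar; lra. }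
    assert (Hyp : Rabs (y * peval l y) <= Rabs K + Rabs c).
    { replace (y * peval l y) with ((c + y * peval l y) - c) by ring.
      eapply Rle_trans. apply Rabs_triang. rewrite Rabs_Ropp. lra. }
    rewrite Rabs_mult, Rabs_right in Hyp by lra.
    apply (Rmult_le_reg_l y). lra. field_simplify; lra. }
  intros c' [<-|hc'].
  - apply (const_small c K Y). intros y hy.
    specialize (H y hy). rewrite (peval_zero l y Hl), Rmult_0_r, Rplus_0_r in H. auto.
  - auto.
Qed.

Lemma Pz0 c l : (exists K Y, forall y, Y <= y -> Rabs (peval (c :: l) y) <= K) ->
  forall c', In c' l -> c' = 0.
Proof.
  intros [K [Y H]]. apply Pz1. exists (Rabs K + Rabs c), (Rmax Y 1). intros y hy.
  assert (h1 : 1 <= y) by (generalize (Rmax_r Y 1); lra).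
  assert (h2 : Y <= y) by (generalize (Rmax_l Y 1); lra).
  specialize (H y h2). simpl in H.
  assert (Hyp : Rabs (y * peval l y) <= Rabs K + Rabs c).
  { replace (y * peval l y) with ((c + y * peval l y) - c) by ring.
    eapply Rle_trans. apply Rabs_triang. rewrite Rabs_Ropp. generalize (Rle_abs K); lra. }
  rewrite Rabs_mult, Rabs_right in Hyp by lra.
  apply (Rmult_le_reg_l y). lra. field_simplify; lra.
Qed.

Definition HypW (W : R -> R) := forall t, 1 <= t -> Rabs (W t - S4 t) <= 105 / t^9.

Lemma absA_bound a0 a1 a2 y : 1 <= y ->
  Rabs (a0 + a1 * y + a2 * y^2) <= (Rabs a0 + Rabs a1 + Rabs a2) * y^2.
Proof.
  intros hy.
  eapply Rle_trans. apply Rabs_triang. eapply Rle_trans. apply Rplus_le_compat_r. apply Rabs_triang.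
  rewrite !Rabs_mult. rewrite (Rabs_right y) by lra. rewrite (Rabs_right (y^2)) by (apply Rle_ge, pow_le; lra).
  assert (0 <= Rabs a0) by apply Rabs_pos. assert (0 <= Rabs a1) by apply Rabs_pos.
  assert (0 <= Rabs a2) by apply Rabs_pos.
  assert (1 <= y^2) by nra. assert (y <= y^2) by nra. nra.
Qed.

Lemma lemmaM W (HW : HypW W) q0 q1 q2 a0 a1 a2 mu : 0 < mu ->
  (exists K Y, forall y, Y <= y ->
     Rabs (q0 + q1 * y + q2 * y^2 + (a0 + a1 * y + a2 * y^2) * W (mu * y)) <= K / y^7) ->
  q0 = 0 /\ q1 = 0 /\ q2 = 0 /\ a0 = 0 /\ a1 = 0 /\ a2 = 0.
Proof.
  intros hmu [K [Y H]].
  set (L := [-15*a0; -15*a1; 3*mu^2*a0 - 15*a2; 3*mu^2*a1; 3*mu^2*a2 - mu^4*a0; - mu^4*a1;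
             mu^6*a0 - mu^4*a2; mu^6*a1 + mu^7*q0; mu^6*a2 + mu^7*q1; mu^7*q2]).
  assert (HL : forall c, In c (tl L) -> c = 0).
  { apply (Pz0 (-15*a0)). exists (mu^7 * K + 105 * (Rabs a0 + Rabs a1 + Rabs a2) / mu^2).
    exists (Rmax Y (Rmax 1 (/ mu))). intros y hy.
    assert (hy1 : 1 <= y) by (generalize (Rmax_l 1 (/mu)) (Rmax_r Y (Rmax 1 (/ mu))); lra).
    assert (hyY : Y <= y) by (generalize (Rmax_l Y (Rmax 1 (/ mu))); lra).
    assert (hymu : / mu <= y) by (generalize (Rmax_r 1 (/mu)) (Rmax_r Y (Rmax 1 (/ mu))); lra).
    assert (ht : 1 <= mu * y).
    { apply (Rmult_le_reg_l (/ mu)). apply Rinv_0_lt_compat; auto.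
      rewrite <- Rmult_assoc, Rinv_l, Rmult_1_l, Rmult_1_r by lra. auto. }
    specialize (H y hyY). specialize (HW (mu * y) ht).
    set (r := W (mu * y) - S4 (mu * y)) in HW.
    set (A := a0 + a1 * y + a2 * y^2) in *.
    assert (Eq : peval (-15*a0 :: tl L) y =
       mu^7 * y^7 * (q0 + q1 * y + q2 * y^2 + A * W (mu * y)) - A * (mu^7 * y^7 * r)).
    { unfold r, S4, A, L. simpl. field. lra. }
    rewrite Eq.
    assert (h1 : Rabs (mu^7 * y^7 * (q0 + q1 * y + q2 * y^2 + A * W (mu * y))) <= mu^7 * K).
    { rewrite Rabs_mult. rewrite (Rabs_right (mu^7 * y^7)) by (apply Rle_ge, Rmult_le_pos; apply pow_le; lra).
      apply (Rle_trans _ (mu^7 * y^7 * (K / y^7))). apply Rmult_le_compat_l; auto.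
      apply Rmult_le_pos; apply pow_le; lra. right. field. lra. }
    assert (h2 : Rabs (A * (mu^7 * y^7 * r)) <= 105 * (Rabs a0 + Rabs a1 + Rabs a2) / mu^2).
    { rewrite !Rabs_mult. rewrite (Rabs_right (mu^7)) by (apply Rle_ge, pow_le; lra).
      rewrite (Rabs_right (y^7)) by (apply Rle_ge, pow_le; lra).
      assert (hA := absA_bound a0 a1 a2 y hy1). fold A in hA.
      assert (hr : mu^7 * y^7 * Rabs r <= 105 / (mu^2 * y^2)).
      { apply (Rle_trans _ (mu^7 * y^7 * (105 / (mu * y)^9))). apply Rmult_le_compat_l; auto.
        apply Rmult_le_pos; apply pow_le; lra. right. field. lra. }
      assert (0 <= Rabs A) by apply Rabs_pos.
      assert (0 <= mu^7 * y^7 * Rabs r) by (apply Rmult_le_pos; [apply Rmult_le_pos; apply pow_le; lra|apply Rabs_pos]).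
      apply (Rle_trans _ ((Rabs a0 + Rabs a1 + Rabs a2) * y^2 * (105 / (mu^2 * y^2)))).
      replace (Rabs A * (mu ^ 7 * (y ^ 7 * Rabs r))) with (Rabs A * (mu^7 * y^7 * Rabs r)) by ring.
      apply Rmult_le_compat; auto.
      right. field. lra. }
    eapply Rle_trans. apply Rabs_triang. rewrite Rabs_Ropp. lra. }
  simpl in HL.
  assert (e1 : - mu^4 * a1 = 0) by (apply HL; simpl; tauto).
  assert (e2 : 3 * mu^2 * a2 - mu^4 * a0 = 0) by (apply HL; simpl; tauto).
  assert (e3 : 3 * mu^2 * a0 - 15 * a2 = 0) by (apply HL; simpl; tauto).
  assert (e4 : mu^6 * a1 + mu^7 * q0 = 0) by (apply HL; simpl; tauto).
  assert (e5 : mu^6 * a2 + mu^7 * q1 = 0) by (apply HL; simpl; tauto).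
  assert (e6 : mu^7 * q2 = 0) by (apply HL; simpl; tauto).
  assert (m2 : 0 < mu^2) by (apply pow_lt; auto).
  assert (m4 : 0 < mu^4) by (apply pow_lt; auto).
  assert (m7 : 0 < mu^7) by (apply pow_lt; auto).
  assert (ha1 : a1 = 0) by nra.
  assert (ha2 : a2 = 0).
  { assert (a2 * (mu^4 * 2) = 0).
    { replace (mu^4) with (mu^2 * mu^2) by ring. nra. }
    nra. }
  assert (ha0 : a0 = 0) by nra.
  subst. repeat split; nra.
Qed.

Lemma abs_le_inv x c : Rabs x <= c -> - c <= x <= c.
Proof. intros h. generalize (Rle_abs x) (Rle_abs (-x)). rewrite Rabs_Ropp. lra. Qed.

Lemma exp_le x y : x <= y -> exp x <= exp y.
Proof. intros [h|<-]. left; apply exp_increasing; auto. lra. Qed.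

Lemma exp_INR_mult n a : exp (INR n * a) = exp a ^ n.
Proof.
  induction n. simpl. rewrite Rmult_0_l, exp_0; auto.
  rewrite S_INR, Rmult_plus_distr_r, exp_plus, IHn, Rmult_1_l. simpl. ring.
Qed.

Lemma exp_ge_id u : 0 <= u -> u <= exp u.
Proof.
  intros hu. destruct (Req_dec u 0) as [->|h]. rewrite exp_0; lra.
  generalize (exp_ineq1 u h); lra.
Qed.

Lemma expo_dom eps P : 0 < eps -> 0 <= P ->
  exists Y, forall y, Y <= y -> P * y^9 <= exp (eps * y).
Proof.
  intros he hP. set (c := (eps / 10)^10).
  assert (hc : 0 < c) by (unfold c; apply pow_lt; lra).
  exists (Rmax 1 (P / c)). intros y hy.
  assert (h1 : 1 <= y) by (generalize (Rmax_l 1 (P/c)); lra).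
  assert (h2 : P / c <= y) by (generalize (Rmax_r 1 (P/c)); lra).
  assert (Hexp : (eps * y / 10)^10 <= exp (eps * y)).
  { replace (eps * y) with (INR 10 * (eps * y / 10)) at 2 by (simpl; field).
    rewrite exp_INR_mult. apply pow_incr. split. apply Rmult_le_pos; [|lra].
    apply Rmult_le_pos; lra. apply exp_ge_id. apply Rmult_le_pos; [|lra]. apply Rmult_le_pos; lra. }
  eapply Rle_trans; [|exact Hexp].
  replace ((eps * y / 10)^10) with (c * y * y^9) by (unfold c; field).
  apply Rmult_le_compat_r. apply pow_le; lra.
  apply (Rmult_le_reg_r (/ c)). apply Rinv_0_lt_compat; auto.
  replace (c * y * / c) with y by (field; lra). auto.
Qed.

Record term := mkT { tal : R; tth : R; tq0 : R; tq1 : R; tq2 : R;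
                     ta0 : R; ta1 : R; ta2 : R; tmu : R }.

Definition Fv (W : R -> R) (u : term) (y : R) :=
  tq0 u + tq1 u * y + tq2 u * y^2 + (ta0 u + ta1 u * y + ta2 u * y^2) * W (tmu u * y).
Definition tv W u x := exp (- tal u * (x - tth u)^2) * Fv W u (x - tth u).
Definition lsum W (l : list term) x := fold_right (fun u acc => tv W u x + acc) 0 l.
Definition azero u := ta0 u = 0 /\ ta1 u = 0 /\ ta2 u = 0.
Definition same u v := tal u = tal v /\ tth u = tth v.

Lemma W_bound W : HypW W -> forall t, 1 <= t -> Rabs (W t) <= 125.
Proof.
  intros HW t ht. specialize (HW t ht).
  assert (hp : forall k, 1 <= t^k) by (intros; apply pow_R1_Rle; lra).
  assert (hi : forall k, 0 < / t^k <= 1).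
  { intros k. split. apply Rinv_0_lt_compat; generalize (hp k); lra.
    rewrite <- Rinv_1. apply Rinv_le_contravar; auto. lra. }
  unfold S4 in HW. unfold Rdiv in HW.
  destruct (hi 1%nat), (hi 3%nat), (hi 5%nat), (hi 7%nat), (hi 9%nat).
  rewrite pow_1 in *.
  apply abs_le_inv in HW. apply Rabs_le. lra.
Qed.

Lemma Fv_bound W (HW : HypW W) u s : 0 < tmu u -> 1 <= s -> / tmu u <= s ->
  Rabs (Fv W u s) <= ((Rabs (tq0 u) + Rabs (tq1 u) + Rabs (tq2 u)) +
                      125 * (Rabs (ta0 u) + Rabs (ta1 u) + Rabs (ta2 u))) * s^2.
Proof.
  intros hmu h1 h2. unfold Fv.
  assert (ht : 1 <= tmu u * s).
  { apply (Rmult_le_reg_l (/ tmu u)). apply Rinv_0_lt_compat; auto.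
    rewrite <- Rmult_assoc, Rinv_l, Rmult_1_l, Rmult_1_r by lra. auto. }
  assert (hWb := W_bound W HW _ ht).
  eapply Rle_trans. apply Rabs_triang. rewrite Rabs_mult.
  assert (hq := absA_bound (tq0 u) (tq1 u) (tq2 u) s h1).
  assert (ha := absA_bound (ta0 u) (ta1 u) (ta2 u) s h1).
  assert (0 <= Rabs (ta0 u + ta1 u * s + ta2 u * s ^ 2)) by apply Rabs_pos.
  assert (0 <= Rabs (W (tmu u * s))) by apply Rabs_pos.
  assert (Rabs (ta0 u + ta1 u * s + ta2 u * s ^ 2) * Rabs (W (tmu u * s)) <=
          (Rabs (ta0 u) + Rabs (ta1 u) + Rabs (ta2 u)) * s ^ 2 * 125).
  { apply Rmult_le_compat; auto. }
  nra.
Qed.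

Lemma decay W (HW : HypW W) (ts u : term) : 0 < tal u -> 0 < tmu u ->
  (tal ts < tal u \/ (tal ts = tal u /\ tth u < tth ts)) ->
  exists X, forall x, X <= x ->
    Rabs (tv W u x) <= exp (- tal ts * (x - tth ts)^2) / (x - tth ts)^7.
Proof.
  intros ha hmu hcase.
  set (a := tal u) in *. set (as_ := tal ts) in *.
  set (d := tth ts - tth u).
  assert (Hexp : exists eps Y0, 0 < eps /\ forall y, Y0 <= y -> 0 <= y ->
      - a * (y + d)^2 <= - as_ * y^2 - eps * y).
  { destruct hcase as [h|[h1 h2]].
    - exists 1, ((2 * a * Rabs d + 1) / (a - as_)). split; [lra|]. intros y hy hy0.
      assert (hd : - Rabs d <= d) by (generalize (Rle_abs (-d)); rewrite Rabs_Ropp; lra).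
      assert ((2 * a * Rabs d + 1) <= (a - as_) * y).
      { apply (Rmult_le_reg_r (/ (a - as_))). apply Rinv_0_lt_compat; lra.
        replace ((a - as_) * y * / (a - as_)) with y by (field; lra). exact hy. }
      assert (0 <= Rabs d) by apply Rabs_pos.
      assert (- (2 * a * Rabs d) * y <= 2 * a * d * y).
      { assert (0 <= (2*a*(d + Rabs d)) * y) by (apply Rmult_le_pos; [apply Rmult_le_pos; lra | lra]). nra. }
      nra.
    - exists (2 * a * d), 0. split. unfold d. rewrite <- h1 in *. nra.
      intros y _ hy. rewrite <- h1. nra. }
  destruct Hexp as [eps [Y0 [heps Hexp]]].
  set (B := (Rabs (tq0 u) + Rabs (tq1 u) + Rabs (tq2 u)) +
            125 * (Rabs (ta0 u) + Rabs (ta1 u) + Rabs (ta2 u))).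
  assert (hB : 0 <= B).
  { unfold B. generalize (Rabs_pos (tq0 u)) (Rabs_pos (tq1 u)) (Rabs_pos (tq2 u))
      (Rabs_pos (ta0 u)) (Rabs_pos (ta1 u)) (Rabs_pos (ta2 u)). lra. }
  destruct (expo_dom eps (4 * B) heps ltac:(lra)) as [Y1 HY1].
  exists (tth ts + Rmax (Rmax Y0 Y1) (1 + Rabs d + / tmu u)).
  intros x hx. set (y := x - tth ts).
  assert (hy0 : Y0 <= y) by (unfold y; generalize (Rmax_l Y0 Y1) (Rmax_l (Rmax Y0 Y1) (1 + Rabs d + / tmu u)); lra).
  assert (hy1 : Y1 <= y) by (unfold y; generalize (Rmax_r Y0 Y1) (Rmax_l (Rmax Y0 Y1) (1 + Rabs d + / tmu u)); lra).
  assert (hy2 : 1 + Rabs d + / tmu u <= y) by (unfold y; generalize (Rmax_r (Rmax Y0 Y1) (1 + Rabs d + / tmu u)); lra).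
  assert (hinv : 0 < / tmu u) by (apply Rinv_0_lt_compat; auto).
  assert (hdabs : - Rabs d <= d <= Rabs d) by (split; [generalize (Rle_abs (-d)); rewrite Rabs_Ropp|apply Rle_abs]; lra).
  assert (hxs : x - tth u = y + d) by (unfold y, d; ring).
  unfold tv. fold a. rewrite hxs.
  assert (hs1 : 1 <= y + d) by lra.
  assert (hs2 : / tmu u <= y + d) by lra.
  assert (HF := Fv_bound W HW u (y + d) hmu hs1 hs2). fold B in HF.
  assert (HE := Hexp y hy0 ltac:(lra)).
  assert (Hs2 : (y + d)^2 <= 4 * y^2) by nra.
  assert (HP := HY1 y hy1).
  rewrite Rabs_mult, Rabs_right by (apply Rle_ge, Rlt_le, exp_pos).
  assert (hy : 1 <= y) by lra.
  assert (hy7 : 0 < y^7) by (apply pow_lt; lra).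
  apply (Rle_trans _ (exp (- as_ * y^2) * exp (- (eps * y)) * (4 * B * y^2))).
  { rewrite <- exp_plus, Rmult_assoc. apply Rmult_le_compat. apply Rlt_le, exp_pos. apply Rabs_pos.
    apply exp_le. lra. nra. }
  rewrite exp_Ropp. unfold Rdiv. rewrite Rmult_assoc. apply Rmult_le_compat_l. apply Rlt_le, exp_pos.
  assert (he : 0 < exp (eps * y)) by apply exp_pos.
  apply (Rmult_le_reg_r (exp (eps * y) * y^7)). apply Rmult_lt_0_compat; auto.
  replace (/ exp (eps * y) * (4 * B * y ^ 2) * (exp (eps * y) * y ^ 7)) with (4 * B * y^9) by (field; lra).
  replace (/ y ^ 7 * (exp (eps * y) * y ^ 7)) with (exp (eps * y)) by (field; lra). auto.
Qed.

Lemma lsum_filter W f l x : lsum W l x = lsum W (filter f l) x + lsum W (filter (fun u => negb (f u)) l) x.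
Proof.
  induction l as [|u l IH]; simpl. ring.
  destruct (f u); simpl; rewrite IH; ring.
Qed.

Lemma filter_lt {A} (f : A -> bool) l t : In t l -> f t = false -> (length (filter f l) < length l)%nat.
Proof.
  induction l as [|u l IH]; simpl; [tauto|]. intros [->|h] hf.
  - rewrite hf. generalize (filter_length_le f l). lia.
  - destruct (f u); simpl; specialize (IH h hf); lia.
Qed.

Lemma max_exists (l : list term) : l <> [] -> exists ts, In ts l /\
  forall u, In u l -> tal ts < tal u \/ (tal ts = tal u /\ tth u <= tth ts).
Proof.
  induction l as [|u l IH]; [tauto|]. intros _.
  destruct l as [|v l'].
  - exists u. split; [left; auto|]. intros w [<-|[]]. right; lra.
  - destruct IH as [ts [hts Hts]]. discriminate.
    destruct (Rlt_dec (tal u) (tal ts)) as [h1|h1].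
    + exists u. split; [left; auto|]. intros w [<-|hw]. right; lra.
      destruct (Hts w hw) as [h|[h h']]; left; lra.
    + destruct (Req_dec (tal u) (tal ts)) as [h2|h2].
      * destruct (Rle_dec (tth u) (tth ts)) as [h3|h3].
        -- exists ts. split; [right; auto|]. intros w [<-|hw]; [right; lra|apply Hts; auto].
        -- exists u. split; [left; auto|]. intros w [<-|hw]. right; lra.
           destruct (Hts w hw) as [h|[h h']]. left; lra. right; lra.
      * exists ts. split; [right; auto|]. intros w [<-|hw]; [left; lra|apply Hts; auto].
Qed.

Definition sameb (ts u : term) : bool :=
  if Req_EM_T (tal u) (tal ts) then if Req_EM_T (tth u) (tth ts) then true else false else false.

Lemma sameb_true ts u : sameb ts u = true <-> same u ts.
Proof.
  unfold sameb, same. destruct (Req_EM_T (tal u) (tal ts)); destruct (Req_EM_T (tth u) (tth ts));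
  split; intros; try tauto; try discriminate; auto.
Qed.

Fixpoint asum W (l : list term) y := match l with
  | [] => 0 | u :: l' => (ta0 u + ta1 u * y + ta2 u * y^2) * W (tmu u * y) + asum W l' y end.
Fixpoint qs0 (l : list term) := match l with [] => 0 | u :: l' => tq0 u + qs0 l' end.
Fixpoint qs1 (l : list term) := match l with [] => 0 | u :: l' => tq1 u + qs1 l' end.
Fixpoint qs2 (l : list term) := match l with [] => 0 | u :: l' => tq2 u + qs2 l' end.

Lemma Fsum W (l : list term) y : fold_right (fun u acc => Fv W u y + acc) 0 l =
  qs0 l + qs1 l * y + qs2 l * y^2 + asum W l y.
Proof. induction l; simpl. ring. rewrite IHl. unfold Fv. ring. Qed.

Lemma oneA W (C : list term) : (forall u v, In u C -> In v C -> ~ azero u -> ~ azero v -> u = v) ->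
  (forall u, In u C -> 0 < tmu u) ->
  exists a0 a1 a2 mu, 0 < mu /\ (forall y, asum W C y = (a0 + a1 * y + a2 * y^2) * W (mu * y)) /\
   ((forall u, In u C -> azero u) -> a0 = 0 /\ a1 = 0 /\ a2 = 0) /\
   (forall u, In u C -> ~ azero u -> exists n, 1 <= n /\ a0 = n * ta0 u /\ a1 = n * ta1 u /\ a2 = n * ta2 u /\ mu = tmu u).
Proof.
  induction C as [|u C IH]; intros Huniq Hmu.
  - exists 0, 0, 0, 1. split; [lra|]. split. intros; simpl; ring. split. auto. intros _ [].
  - destruct IH as [a0 [a1 [a2 [mu [hmu [Hs [Hz Hn]]]]]]].
    { intros; apply Huniq; simpl; auto. }
    { intros; apply Hmu; simpl; auto. }
    destruct (classic (azero u)) as [hu|hu].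
    + exists a0, a1, a2, mu. split; auto. split.
      { intros y; simpl. rewrite Hs. destruct hu as [e0 [e1 e2]]. rewrite e0, e1, e2. ring. }
      split. intros H; apply Hz; intros; apply H; simpl; auto.
      intros v [<-|hv] hv'. tauto. apply Hn; auto.
    + destruct (classic (exists v, In v C /\ ~ azero v)) as [[v [hv hv']]|hno].
      * assert (v = u) by (apply Huniq; simpl; auto). subst v.
        destruct (Hn u hv hv') as [n [hn [e0 [e1 [e2 Hm]]]]].
        exists ((n+1) * ta0 u), ((n+1) * ta1 u), ((n+1) * ta2 u), (tmu u).
        split. apply Hmu; simpl; auto. split.
        { intros y; simpl. rewrite Hs, e0, e1, e2, Hm. ring. }
        split. intros H; exfalso; apply hu, H; simpl; auto.
        intros w [<-|hw] hw'. exists (n+1). repeat split; lra.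
        assert (w = u) by (apply Huniq; simpl; auto). subst w. exists (n+1); repeat split; lra.
      * assert (Hall : forall w, In w C -> azero w).
        { intros w hw. apply NNPP. intros hw'. apply hno. exists w; auto. }
        destruct (Hz Hall) as [e0 [e1 e2]].
        exists (ta0 u), (ta1 u), (ta2 u), (tmu u). split. apply Hmu; simpl; auto. split.
        { intros y; simpl. rewrite Hs, e0, e1, e2. ring. }
        split. intros H; exfalso; apply hu, H; simpl; auto.
        intros w [<-|hw] hw'. exists 1. repeat split; lra. exfalso. apply hw', Hall; auto.
Qed.

Lemma lsum_class W ts C x : (forall u, In u C -> same u ts) ->
  lsum W C x = exp (- tal ts * (x - tth ts)^2) * fold_right (fun u acc => Fv W u (x - tth ts) + acc) 0 C.
Proof.
  induction C as [|u C IH]; intros H; unfold lsum in *; cbn [fold_right]. ring.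
  rewrite IH by (intros; apply H; simpl; auto).
  destruct (H u (or_introl eq_refl)) as [e1 e2]. unfold tv. rewrite e1, e2. ring.
Qed.

Lemma lsum_bound W (g : R -> R) l : (forall u, In u l -> exists X, forall x, X <= x -> Rabs (tv W u x) <= g x) ->
  exists X, forall x, X <= x -> Rabs (lsum W l x) <= INR (length l) * g x.
Proof.
  induction l as [|u l IH]; intros H.
  - exists 0. intros x _. simpl. rewrite Rabs_R0. lra.
  - destruct IH as [X1 H1]. intros; apply H; simpl; auto.
    destruct (H u (or_introl eq_refl)) as [X2 H2].
    exists (Rmax X1 X2). intros x hx. simpl lsum. simpl length. rewrite S_INR.
    specialize (H1 x ltac:(generalize (Rmax_l X1 X2); lra)).
    specialize (H2 x ltac:(generalize (Rmax_r X1 X2); lra)).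
    eapply Rle_trans. apply Rabs_triang. fold (lsum W l x). lra.
Qed.

Lemma mainL W (HW : HypW W) : forall n (l : list term), (length l <= n)%nat ->
  (forall u, In u l -> 0 < tal u /\ 0 < tmu u) ->
  (forall u v, In u l -> In v l -> same u v -> ~ azero u -> ~ azero v -> u = v) ->
  (exists X, forall x, X <= x -> lsum W l x = 0) ->
  (forall u, In u l -> azero u) /\
  (forall u, In u l -> (forall v, In v l -> same u v -> v = u) -> tq0 u = 0 /\ tq1 u = 0 /\ tq2 u = 0).
Proof.
  induction n as [|n IHn]; intros l hlen Hpos Huniq [X0 HX0].
  - destruct l; simpl in hlen; [|lia]. split; intros u [].
  - destruct (classic (l = [])) as [hnil|hnil].
    { subst l. split; intros u []. }
    destruct (max_exists l hnil) as [ts [hts Hmax]].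
    set (C := filter (sameb ts) l). set (Rr := filter (fun u => negb (sameb ts u)) l).
    assert (HC : forall u, In u C <-> In u l /\ same u ts).
    { intros u. unfold C. rewrite filter_In, sameb_true. tauto. }
    assert (HR : forall u, In u Rr <-> In u l /\ ~ same u ts).
    { intros u. unfold Rr. rewrite filter_In. rewrite <- sameb_true.
      destruct (sameb ts u); simpl; split; intros [h1 h2]; split; auto; try discriminate; congruence. }
    assert (htsC : In ts C) by (apply HC; split; auto; split; auto).
    assert (hlenR : (length Rr <= n)%nat).
    { assert (h := filter_lt (sameb ts) l ts hts).
      assert (hl := filter_length (sameb ts) l). fold C Rr in hl.
      destruct C as [|c C']. destruct htsC. simpl in hl. lia. }
    destruct (lsum_bound W (fun x => exp (- tal ts * (x - tth ts)^2) / (x - tth ts)^7) Rr) as [X1 HX1].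
    { intros u hu. apply HR in hu as [hu hnsame]. destruct (Hpos u hu) as [h1 h2].
      apply decay; auto.
      destruct (Hmax u hu) as [h|[h h']]. left; auto. right. split; auto.
      destruct h' as [h'|h']; auto. exfalso. apply hnsame. split; auto. }
    destruct (oneA W C) as [a0 [a1 [a2 [mu [hmu [Hs [Hz Hn]]]]]]].
    { intros u v hu hv. apply HC in hu as [hu hu']. apply HC in hv as [hv hv'].
      apply Huniq; auto. destruct hu', hv'. split; congruence. }
    { intros u hu. apply HC in hu as [hu _]. apply Hpos; auto. }
    set (N := INR (length Rr)).
    assert (hN : 0 <= N) by apply pos_INR.
    assert (Hkey : forall x, X0 <= x -> X1 <= x ->
       Rabs (qs0 C + qs1 C * (x - tth ts) + qs2 C * (x - tth ts)^2 + (a0 + a1 * (x - tth ts) + a2 * (x - tth ts)^2) * W (mu * (x - tth ts)))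
       <= N / (x - tth ts)^7).
    { intros x h0 h1. specialize (HX0 x h0). specialize (HX1 x h1).
      rewrite (lsum_filter W (sameb ts)) in HX0. fold C Rr in HX0.
      rewrite (lsum_class W ts C x) in HX0 by (intros u hu; apply HC; auto).
      rewrite Fsum, Hs in HX0.
      set (F := qs0 C + qs1 C * (x - tth ts) + qs2 C * (x - tth ts)^2 + (a0 + a1 * (x - tth ts) + a2 * (x - tth ts)^2) * W (mu * (x - tth ts))) in *.
      set (E := exp (- tal ts * (x - tth ts)^2)) in *.
      assert (hE : 0 < E) by apply exp_pos.
      assert (lsum W Rr x = - (E * F)) by lra. rewrite H in HX1.
      rewrite Rabs_Ropp, Rabs_mult, (Rabs_right E) in HX1 by lra.
      apply (Rmult_le_reg_l E); auto. unfold Rdiv in *. replace (E * (N * / (x - tth ts)^7)) with (N * (E * / (x - tth ts)^7)) by ring. exact HX1. }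
    destruct (lemmaM W HW (qs0 C) (qs1 C) (qs2 C) a0 a1 a2 mu hmu) as [e0 [e1 [e2 [f0 [f1 f2]]]]].
    { exists N, (Rmax X0 X1 - tth ts). intros y hy.
      specialize (Hkey (y + tth ts) ltac:(generalize (Rmax_l X0 X1); lra) ltac:(generalize (Rmax_r X0 X1); lra)).
      replace (y + tth ts - tth ts) with y in Hkey by ring. auto. }
    destruct (IHn Rr hlenR) as [IH1 IH2].
    { intros u hu. apply HR in hu as [hu _]. auto. }
    { intros u v hu hv. apply HR in hu as [hu _]. apply HR in hv as [hv _]. apply Huniq; auto. }
    { exists X0. intros x hx. specialize (HX0 x hx).
      rewrite (lsum_filter W (sameb ts)) in HX0. fold C Rr in HX0.
      rewrite (lsum_class W ts C x) in HX0 by (intros u hu; apply HC; auto).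
      rewrite Fsum, Hs, e0, e1, e2, f0, f1, f2 in HX0. lra. }
    split.
    + intros u hu. destruct (classic (same u ts)) as [hs|hs].
      * apply NNPP. intros hz. destruct (Hn u ltac:(apply HC; auto) hz) as [m [hm [g0 [g1 [g2 _]]]]].
        apply hz. unfold azero. rewrite f0 in g0. rewrite f1 in g1. rewrite f2 in g2.
        repeat split; nra.
      * apply IH1. apply HR; auto.
    + intros u hu Hun. destruct (classic (same u ts)) as [hs|hs].
      * assert (HCu : forall v, In v C -> v = u).
        { intros v hv. apply HC in hv as [hv hv']. apply Hun; auto. destruct hs, hv'. split; congruence. }
        assert (Hq : forall (g : term -> R), (forall l', (forall v, In v l' -> v = u) ->
             fold_right (fun v acc => g v + acc) 0 l' = INR (length l') * g u)).
        { intros g l'. induction l' as [|v l' IHl]; intros Hl; simpl. ring.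
          rewrite IHl by (intros; apply Hl; simpl; auto). rewrite (Hl v (or_introl eq_refl)).
          destruct (length l'); simpl; ring. }
        assert (hlenC : (1 <= length C)%nat) by (destruct C; [destruct htsC|simpl; lia]).
        apply le_INR in hlenC. simpl in hlenC.
        assert (q0e : qs0 C = INR (length C) * tq0 u).
        { rewrite <- (Hq tq0 C HCu). clear. induction C; simpl; try rewrite IHC; auto. }
        assert (q1e : qs1 C = INR (length C) * tq1 u).
        { rewrite <- (Hq tq1 C HCu). clear. induction C; simpl; try rewrite IHC; auto. }
        assert (q2e : qs2 C = INR (length C) * tq2 u).
        { rewrite <- (Hq tq2 C HCu). clear. induction C; simpl; try rewrite IHC; auto. }
        repeat split; nra.
      * apply IH2. apply HR; auto. intros v hv hs'. apply HR in hv as [hv _]. apply Hun; auto.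
Qed.


Definition sS (a b : nat -> R) (P : nat -> bool) N := sum_f_R0 (fun n => if P n then b n - a n else 0) N.
Fixpoint cnt (P : nat -> bool) N : nat :=
  match N with O => if P O then 1 else 0 | S k => (cnt P k + if P (S k) then 1 else 0)%nat end.
Definition rm (P : nat -> bool) n0 := fun n => if Nat.eqb n n0 then false else P n.

Lemma sS_rm (a b : nat -> R) P n0 N : P n0 = true -> (n0 <= N)%nat -> sS a b P N = (b n0 - a n0) + sS a b (rm P n0) N.
Proof.
  intros hS. induction N; intros hN; unfold sS, rm in *.
  - assert (n0 = 0)%nat by lia. subst. simpl. rewrite hS. simpl. ring.
  - destruct (Nat.eq_dec n0 (S N)) as [->|hne].
    + rewrite !tech5. rewrite hS, Nat.eqb_refl.
      assert (E : forall k, (k <= N)%nat -> (if Nat.eqb k (S N) then false else P k) = P k).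
      { intros k hk. destruct (Nat.eqb_spec k (S N)); [lia|auto]. }
      rewrite (sum_eq (fun n => if (if Nat.eqb n (S N) then false else P n) then b n - a n else 0) (fun n => if P n then b n - a n else 0)). ring.
      intros i hi. rewrite E; auto.
    + rewrite !tech5. rewrite IHN by lia. destruct (Nat.eqb_spec (S N) n0); [lia|]. ring.
Qed.

Lemma cnt_rm P n0 N : P n0 = true -> (n0 <= N)%nat -> cnt P N = S (cnt (rm P n0) N).
Proof.
  intros hS. induction N; intros hN; unfold rm in *; simpl.
  - assert (n0 = 0)%nat by lia. subst. rewrite hS. simpl. auto.
  - destruct (Nat.eq_dec n0 (S N)) as [->|hne].
    + rewrite hS, Nat.eqb_refl.
      assert (E : forall k, (k <= N)%nat -> cnt (fun n => if Nat.eqb n (S N) then false else P n) k = cnt P k).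
      { induction k; intros hk; simpl; [auto|].
        rewrite IHk by lia. replace (k =? N)%nat with false; auto. symmetry; apply Nat.eqb_neq; lia. }
      rewrite E; [lia|auto].
    + rewrite IHN by lia. destruct (Nat.eqb_spec (S N) n0); [lia|]. replace (match n0 with 0%nat => false | S m' => (N =? m')%nat end) with false. destruct (P (S N)); lia. symmetry; change (Nat.eqb (S N) n0 = false); apply Nat.eqb_neq; lia.
Qed.

Lemma sS_nonneg (a b : nat -> R) (hab : forall n, a n <= b n) P N : 0 <= sS a b P N.
Proof. apply cond_pos_sum. intros n. destruct (P n); generalize (hab n); lra. Qed.

Lemma cover_fin (a b : nat -> R) (hab : forall n, a n <= b n) : forall k P N c d, (cnt P N <= k)%nat ->
  (forall x, c <= x <= d -> exists n, (n <= N)%nat /\ P n = true /\ a n < x < b n) ->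
  d - c <= sS a b P N.
Proof.
  induction k; intros P N c d hk Hcov.
  - destruct (Rle_dec c d) as [h|h]; [|generalize (sS_nonneg a b hab P N); lra].
    destruct (Hcov c ltac:(lra)) as [n [hn [hS _]]].
    rewrite (cnt_rm P n N hS hn) in hk. lia.
  - destruct (Rle_dec c d) as [h|h]; [|generalize (sS_nonneg a b hab P N); lra].
    destruct (Hcov c ltac:(lra)) as [n0 [hn0 [hS0 hc0]]].
    rewrite (sS_rm a b P n0 N hS0 hn0).
    rewrite (cnt_rm P n0 N hS0 hn0) in hk.
    assert (IH := IHk (rm P n0) N (b n0) d ltac:(lia)).
    assert (d - b n0 <= sS a b (rm P n0) N).
    { apply IH. intros x hx. destruct (Hcov x ltac:(lra)) as [n [hn [hS hxn]]].
      exists n. split; auto. split; auto. unfold rm. destruct (Nat.eqb_spec n n0); auto.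
      subst. lra. }
    lra.
Qed.

Lemma sS_le (a b : nat -> R) (hab : forall n, a n <= b n) P N : sS a b P N <= sum_f_R0 (fun n => b n - a n) N.
Proof. apply sum_Rle. intros n _. destruct (P n); generalize (hab n); lra. Qed.



Lemma list_bound (lr : list R) : exists N, forall n, In (INR n) lr -> (n <= N)%nat.
Proof.
  induction lr as [|r lr IH]. exists 0%nat. intros n [].
  destruct IH as [N HN]. destruct (classic (exists n, r = INR n)) as [[m hm]|hno].
  - exists (max N m). intros n [h|h]. subst. apply INR_eq in h. subst. lia.
    specialize (HN n h). lia.
  - exists N. intros n [h|h]. exfalso. apply hno. exists n; auto. auto.
Qed.

Lemma interval_not_negl c d (a b : nat -> R) : c < d -> (forall n, a n <= b n) ->
  (forall x, c <= x <= d -> exists n, a n < x < b n) ->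
  exists N, d - c <= sum_f_R0 (fun n => b n - a n) N.
Proof.
  intros hcd hab Hcov.
  set (fam := fun r y => exists n, r = INR n /\ a n < y < b n).
  assert (cf : forall r, (exists y, fam r y) -> (fun r => exists n : nat, r = INR n) r).
  { intros r [y [n [h _]]]. exists n; auto. }
  set (F := mkfamily (fun r => exists n : nat, r = INR n) fam cf).
  assert (Hop : covering_open_set (fun x => c <= x <= d) F).
  { split.
    - intros x hx. destruct (Hcov x hx) as [n hn]. exists (INR n). simpl. exists n. auto.
    - intros r y [n [hr hy]]. 
      assert (hpos : 0 < Rmin (y - a n) (b n - y)) by (apply Rmin_pos; lra).
      exists (mkposreal _ hpos). intros z hz. unfold disc in hz. simpl in hz.
      exists n. split; auto.
      generalize (Rmin_l (y - a n) (b n - y)) (Rmin_r (y - a n) (b n - y)).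
      generalize (Rle_abs (z - y)) (Rle_abs (-(z - y))). rewrite Rabs_Ropp. lra. }
  destruct (compact_P3 c d F Hop) as [D [Hcv [lr Hlr]]].
  destruct (list_bound lr) as [N HN].
  exists N.
  assert (H := cover_fin a b hab (cnt (fun _ => true) N) (fun _ => true) N c d (le_n _)).
  unfold sS in H. apply H.
  intros x hx. destruct (Hcv x hx) as [r [[n [hr hxn]] hD]].
  exists n. split; auto. apply HN. rewrite <- hr. apply Hlr. split; auto. exists n; auto.
Qed.

Lemma negl_zero (g : R -> R) : (forall x, continuity_pt g x) -> negligible (fun x => g x <> 0) ->
  forall x, g x = 0.
Proof.
  intros Hc Hn x0. apply NNPP. intros h0.
  assert (hp : 0 < Rabs (g x0)) by (apply Rabs_pos_lt; auto).
  destruct (Hc x0 (Rabs (g x0)) hp) as [alp [halp Halp]].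
  set (d := alp / 2).
  destruct (Hn d ltac:(unfold d; lra)) as [a [b [hab [Hcov Hsum]]]].
  destruct (interval_not_negl (x0 - d) (x0 + d) a b ltac:(unfold d; lra) hab) as [N HN].
  { intros x hx. apply Hcov. intros hx0.
    destruct (Req_dec x x0) as [->|hne]. auto.
    assert (Rabs (x - x0) < alp).
    { apply Rabs_def1; unfold d in hx; lra. }
    specialize (Halp x (conj (conj I (not_eq_sym hne)) H)). simpl in Halp. unfold R_dist in Halp.
    rewrite hx0, Rminus_0_l, Rabs_Ropp in Halp. lra. }
  specialize (Hsum N). unfold d in *. lra.
Qed.

Lemma Phi_is_derive y : is_derive Phi y (phi y).
Proof. apply is_derive_Reals. apply Phi_deriv. Qed.
Lemma Phi_ex_derive y : ex_derive Phi y.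
Proof. eexists. apply Phi_is_derive. Qed.
Lemma Derive_Phi y : Derive Phi y = phi y.
Proof. apply is_derive_unique, Phi_is_derive. Qed.

Definition Dth x t v m := 2 / v * ((x - t) / sqrt v * phi ((x - t) / sqrt v) * Phi (m * (x - t) / sqrt v)
   - m * phi ((x - t) / sqrt v) * phi (m * (x - t) / sqrt v)).
Definition Dv x t v m := / (v * sqrt v) * ((((x - t) / sqrt v)^2 - 1) * phi ((x - t) / sqrt v) * Phi (m * (x - t) / sqrt v)
   - m * ((x - t) / sqrt v) * phi ((x - t) / sqrt v) * phi (m * (x - t) / sqrt v)).
Definition Dm x t v m := 2 / sqrt v * ((x - t) / sqrt v) * phi ((x - t) / sqrt v) * phi (m * (x - t) / sqrt v).

Lemma is_derive_eq (f : R -> R) x l l' : is_derive f x l -> l = l' -> is_derive f x l'.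
Proof. intros H <-; auto. Qed.

Lemma sqrt_sq v : 0 < v -> sqrt v * sqrt v = v.
Proof. intros; apply sqrt_sqrt; lra. Qed.

Lemma dth_formula x t v m : 0 < v -> derivable_pt_lim (fun t => skn x t v m) t (Dth x t v m).
Proof.
  intros hv. apply is_derive_Reals. unfold skn.
  assert (hs : 0 < sqrt v) by (apply sqrt_lt_R0; auto).
  evar (e : R).
  assert (H : is_derive (fun t => 2 / sqrt v * phi ((x - t) / sqrt v) * Phi (m * (x - t) / sqrt v)) t e).
  { apply (is_derive_mult (fun t => 2 / sqrt v * phi ((x - t) / sqrt v)) (fun t => Phi (m * (x - t) / sqrt v))).
    - apply (is_derive_scal (fun t => phi ((x - t) / sqrt v))).
      apply (is_derive_comp phi (fun t => (x - t) / sqrt v)). apply phi_deriv.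
      auto_derive; [lra|]. reflexivity.
    - apply (is_derive_comp Phi (fun t => m * (x - t) / sqrt v)). apply Phi_is_derive.
      auto_derive; [lra|]. reflexivity.
    - intros; simpl; unfold mult; simpl; ring. }
  eapply is_derive_eq. exact H. subst e. unfold Dth.
  unfold plus, mult, scal; simpl; unfold mult; simpl.
  set (s := sqrt v) in *. replace v with (s * s) by (unfold s; apply sqrt_sq; auto).
  field. lra.
Qed.

Lemma dv_formula x t v m : 0 < v -> derivable_pt_lim (fun v => skn x t v m) v (Dv x t v m).
Proof.
  intros hv. apply is_derive_Reals. unfold skn.
  assert (hs : 0 < sqrt v) by (apply sqrt_lt_R0; auto).
  evar (e : R).
  assert (H : is_derive (fun v => 2 / sqrt v * phi ((x - t) / sqrt v) * Phi (m * (x - t) / sqrt v)) v e).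
  { apply (is_derive_mult (fun v => 2 / sqrt v * phi ((x - t) / sqrt v)) (fun v => Phi (m * (x - t) / sqrt v))).
    - apply (is_derive_mult (fun v => 2 / sqrt v) (fun v => phi ((x - t) / sqrt v))).
      auto_derive. lra. reflexivity.
      apply (is_derive_comp phi (fun v => (x - t) / sqrt v)). apply phi_deriv.
      auto_derive; [lra|]. reflexivity.
      intros; simpl; unfold mult; simpl; ring.
    - apply (is_derive_comp Phi (fun v => m * (x - t) / sqrt v)). apply Phi_is_derive.
      auto_derive; [lra|]. reflexivity.
    - intros; simpl; unfold mult; simpl; ring. }
  eapply is_derive_eq. exact H. subst e. unfold Dv.
  unfold plus, mult, scal; simpl; unfold mult; simpl.
  set (s := sqrt v) in *. replace v with (s * s) by (unfold s; apply sqrt_sq; auto).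
  field. lra.
Qed.

Lemma dm_formula x t v m : 0 < v -> derivable_pt_lim (fun m => skn x t v m) m (Dm x t v m).
Proof.
  intros hv. apply is_derive_Reals. unfold skn.
  assert (hs : 0 < sqrt v) by (apply sqrt_lt_R0; auto).
  evar (e : R).
  assert (H : is_derive (fun m => 2 / sqrt v * phi ((x - t) / sqrt v) * Phi (m * (x - t) / sqrt v)) m e).
  { apply (is_derive_scal (fun m => Phi (m * (x - t) / sqrt v))).
    apply (is_derive_comp Phi (fun m => m * (x - t) / sqrt v)). apply Phi_is_derive.
    auto_derive; [lra|]. reflexivity. }
  eapply is_derive_eq. exact H. subst e. unfold Dm.
  unfold plus, mult, scal; simpl; unfold mult; simpl.
  set (s := sqrt v) in *. field. lra.
Qed.

Definition kap m lam := if Rlt_dec 0 m then 1 - lam else lam.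
Definition sg m := if Rlt_dec 0 m then -1 else 1.
Definition sp := sqrt (2 * PI).

Definition Gt th v m lam (a b c d : R) :=
  let s := sqrt v in
  mkT (/ (2 * v)) th (kap m lam / sp * (2 * a / s - c / (v * s))) (kap m lam / sp * (2 * b / (v * s)))
      (kap m lam / sp * (c / (v * v * s))) 0 0 0 1.
Definition Ht th v m (a b c d : R) :=
  let s := sqrt v in
  mkT ((1 + m^2) / (2 * v)) th (- 2 * b * m / v / (sp * sp)) ((- c * m / (v * s) + 2 * d / s) / s / (sp * sp)) 0
      (sg m / (sp * sp) * (2 * a / s - c / (v * s))) (sg m / (sp * sp) * (2 * b / (v * s)))
      (sg m / (sp * sp) * (c / (v * v * s))) (Rabs m / s).

Lemma phi_z x t v : 0 < v -> phi ((x - t) / sqrt v) = exp (- / (2 * v) * (x - t)^2) / sp.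
Proof.
  intros hv. unfold phi, gauss, sp. f_equal. f_equal.
  assert (hs : 0 < sqrt v) by (apply sqrt_lt_R0; auto).
  set (s := sqrt v) in *. replace v with (s * s) by (unfold s; apply sqrt_sq; auto). field. lra.
Qed.

Lemma phi_mz x t v m : 0 < v -> phi (m * (x - t) / sqrt v) = exp (- (m^2 / (2 * v)) * (x - t)^2) / sp.
Proof.
  intros hv. unfold phi, gauss, sp. f_equal. f_equal.
  assert (hs : 0 < sqrt v) by (apply sqrt_lt_R0; auto).
  set (s := sqrt v) in *. replace v with (s * s) by (unfold s; apply sqrt_sq; auto). field. lra.
Qed.

Lemma exp_split x t v m : exp (- ((1 + m^2) / (2 * v)) * (x - t)^2) =
  exp (- / (2 * v) * (x - t)^2) * exp (- (m^2 / (2 * v)) * (x - t)^2).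
Proof. rewrite <- exp_plus. f_equal. unfold Rdiv. ring. Qed.

Lemma term_identity x th v m lam (W : R -> R) a b c d : 0 < v -> m <> 0 ->
  (forall u, Phi (- u) = lam + phi u * W u) ->
  a * skn x th v m + b * Dth x th v m + c * Dv x th v m + d * Dm x th v m =
  tv W (Gt th v m lam a b c d) x + tv W (Ht th v m a b c d) x.
Proof.
  intros hv hm HW.
  assert (hs : 0 < sqrt v) by (apply sqrt_lt_R0; auto).
  assert (hsp : 0 < sp) by apply s2pi_pos.
  assert (HPhi : Phi (m * (x - th) / sqrt v) = kap m lam + sg m * phi (m * (x - th) / sqrt v) * W (Rabs m / sqrt v * (x - th))).
  { unfold kap, sg. destruct (Rlt_dec 0 m) as [h|h].
    - rewrite <- (Ropp_involutive (m * (x - th) / sqrt v)), Phi_sym, HW.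
      rewrite Rabs_right by lra. replace (m / sqrt v * (x - th)) with (m * (x - th) / sqrt v) by (field; lra). rewrite Ropp_involutive. ring.
    - rewrite Rabs_left by lra.
      replace (m * (x - th) / sqrt v) with (- (- m / sqrt v * (x - th))) by (field; lra).
      rewrite HW. replace (phi (- (- m / sqrt v * (x - th)))) with (phi (- m / sqrt v * (x - th))).
      ring. unfold phi. rewrite gauss_even. auto. }
  unfold skn, Dth, Dv, Dm. rewrite HPhi. unfold tv, Fv, Gt, Ht. cbn [tal tth tq0 tq1 tq2 ta0 ta1 ta2 tmu].
  rewrite phi_z, phi_mz, exp_split by auto.
  set (E1 := exp (- / (2 * v) * (x - th)^2)).
  set (E2 := exp (- (m^2 / (2 * v)) * (x - th)^2)).
  set (w := W (Rabs m / sqrt v * (x - th))).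
  replace (Rabs m / sqrt v * (x - th)) with (Rabs m / sqrt v * (x - th)) by auto.
  set (s := sqrt v) in *. replace v with (s * s) by (unfold s; apply sqrt_sq; auto).
  field. lra.
Qed.

Lemma prod_zero n f : Rprod_upto n f = 0 <-> exists j, (j < n)%nat /\ f j = 0.
Proof.
  induction n; simpl.
  - split. intros h; lra. intros [j [h _]]; lia.
  - split.
    + intros h. apply Rmult_integral in h as [h|h].
      * apply IHn in h as [j [hj hf]]. exists j; split; auto; lia.
      * exists n; split; auto.
    + intros [j [hj hf]]. destruct (Nat.eq_dec j n) as [->|hne].
      * rewrite hf; ring.
      * assert (Rprod_upto n f = 0) by (apply IHn; exists j; split; auto; lia). rewrite H; ring.
Qed.

Lemma Rsum_ext n f g : (forall j, (j < n)%nat -> f j = g j) -> Rsum_upto n f = Rsum_upto n g.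
Proof.
  induction n; simpl; auto. intros H. rewrite IHn by (intros; apply H; lia). rewrite H by lia. auto.
Qed.

Lemma Rsum_plus n f g : Rsum_upto n (fun j => f j + g j) = Rsum_upto n f + Rsum_upto n g.
Proof. induction n; simpl. ring. rewrite IHn. ring. Qed.

Lemma Rsum_single n i X : (i < n)%nat -> Rsum_upto n (fun k => if Nat.eqb k i then X else 0) = X.
Proof.
  induction n; intros hi; [lia|]. simpl. destruct (Nat.eq_dec i n) as [->|hne].
  - rewrite Nat.eqb_refl. rewrite (Rsum_ext n _ (fun _ => 0)).
    + assert (Z : forall k, Rsum_upto k (fun _ => 0) = 0) by (induction k; simpl; [|rewrite IHk]; ring).
      rewrite Z; ring.
    + intros j hj. destruct (Nat.eqb_spec j n); [lia|auto].
  - rewrite IHn by lia. destruct (Nat.eqb_spec n i); [lia|]. ring.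
Qed.

Lemma Rsum_list n (g : nat -> R) : Rsum_upto n g = fold_right (fun j acc => g j + acc) 0 (seq 0 n).
Proof.
  induction n; [simpl; auto|]. cbn [Rsum_upto]. rewrite seq_S, fold_right_app. simpl fold_right at 2. rewrite IHn.
  generalize (seq 0 n). intros l. induction l; simpl. ring. rewrite <- IHl. ring.
Qed.

Lemma lsum_flat W (F G : nat -> term) l x :
  lsum W (flat_map (fun j => [F j; G j]) l) x = fold_right (fun j acc => (tv W (F j) x + tv W (G j) x) + acc) 0 l.
Proof. induction l; simpl; auto. unfold lsum in *. simpl. rewrite IHl. ring. Qed.

Lemma lsum_map W (G : nat -> term) l x :
  lsum W (map G l) x = fold_right (fun j acc => tv W (G j) x + acc) 0 l.
Proof. induction l; simpl; auto. unfold lsum in *. simpl. rewrite IHl. ring. Qed.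

Lemma negl_mono (S1 S2 : R -> Prop) : negligible S1 -> (forall x, S2 x -> S1 x) -> negligible S2.
Proof.
  intros H Hs eps he. destruct (H eps he) as [a [b [h1 [h2 h3]]]]. exists a, b. split; auto.
Qed.

Lemma negl_empty (S : R -> Prop) : (forall x, ~ S x) -> negligible S.
Proof.
  intros H eps he. exists (fun _ => 0), (fun _ => 0). split. intros; lra. split.
  intros x hx; exfalso; apply (H x hx). intros N. induction N; simpl; lra.
Qed.

Lemma cont_comb th v m a b c d x : 0 < v ->
  continuity_pt (fun x => a * skn x th v m + b * Dth x th v m + c * Dv x th v m + d * Dm x th v m) x.
Proof.
  intros hv. assert (hs : 0 < sqrt v) by (apply sqrt_lt_R0; auto).
  apply derivable_continuous_pt. apply ex_derive_Reals_0.
  unfold skn, Dth, Dv, Dm, phi, gauss. auto_derive.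
  repeat split; try (apply Phi_ex_derive); try lra.
  all: try (apply Rgt_not_eq; unfold Rgt; repeat apply Rmult_lt_0_compat; lra).
Qed.

Lemma Rsum_cont n (F : nat -> R -> R) x : (forall j, (j < n)%nat -> continuity_pt (F j) x) ->
  continuity_pt (fun x => Rsum_upto n (fun j => F j x)) x.
Proof.
  induction n; intros H; simpl.
  - apply continuity_pt_const. intros ? ?; auto.
  - apply (continuity_pt_plus (fun x => Rsum_upto n (fun j => F j x)) (F n)).
    apply IHn; intros; apply H; lia. apply H; lia.
Qed.

Lemma fold_ext_in (f g : nat -> R) l : (forall j, In j l -> f j = g j) ->
  fold_right (fun j acc => f j + acc) 0 l = fold_right (fun j acc => g j + acc) 0 l.
Proof. induction l; simpl; auto. intros H. rewrite H, IHl; auto. Qed.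

Lemma Dm_closed x th v m : 0 < v ->
  Dm x th v m = 2 * (x - th) / v * exp (- ((1 + m^2) / (2 * v)) * (x - th)^2) / (sp * sp).
Proof.
  intros hv. assert (hs : 0 < sqrt v) by (apply sqrt_lt_R0; auto).
  assert (hsp : 0 < sp) by apply s2pi_pos.
  unfold Dm. rewrite phi_z, phi_mz, exp_split by auto.
  set (s := sqrt v) in *. replace v with (s * s) by (unfold s; apply sqrt_sq; auto).
  field. lra.
Qed.

Lemma Phi0 : Phi 0 = / 2.
Proof. assert (H := Phi_sym 0). rewrite Ropp_0 in H. lra. Qed.

Lemma phi0 : phi 0 = / sp.
Proof. unfold phi, gauss, sp. replace (- (0 * 0) / 2) with 0 by field. rewrite exp_0. unfold Rdiv; ring. Qed.

Lemma m0_identity x th v : 0 < v ->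
  - 2 * v / (sqrt v * sp) * Dth x th v 0 + 1 * Dm x th v 0 = 0.
Proof.
  intros hv. assert (hs : 0 < sqrt v) by (apply sqrt_lt_R0; auto).
  assert (hsp : 0 < sp) by apply s2pi_pos.
  unfold Dth, Dm. replace (0 * (x - th) / sqrt v) with 0 by (field; lra).
  rewrite Phi0, phi0.
  set (s := sqrt v) in *. replace v with (s * s) by (unfold s; apply sqrt_sq; auto).
  field. lra.
Qed.

Lemma tv_G0 W th v m lam d x : 0 < v -> tv W (Gt th v m lam 0 0 0 d) x = 0.
Proof.
  intros hv. assert (hs : 0 < sqrt v) by (apply sqrt_lt_R0; auto).
  unfold tv, Fv, Gt. cbn [tal tth tq0 tq1 tq2 ta0 ta1 ta2 tmu]. unfold Rdiv; rewrite !Rmult_0_r, !Rmult_0_l, ?Rminus_0_r, ?Rmult_0_r, ?Rmult_0_l. ring.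
Qed.

Theorem lemma4p1 (k0 : nat) (theta v m : nat -> R)
  (hv : forall j, (j < k0)%nat -> 0 < v j)
  (hdist : forall i j, (i < k0)%nat -> (j < k0)%nat -> i <> j ->
     (theta i, v i, m i) <> (theta j, v j, m j))
  (dth dv dm : nat -> R -> R)
  (hdth : forall j x, (j < k0)%nat ->
     derivable_pt_lim (fun t => skn x t (v j) (m j)) (theta j) (dth j x))
  (hdv : forall j x, (j < k0)%nat ->
     derivable_pt_lim (fun t => skn x (theta j) t (m j)) (v j) (dv j x))
  (hdm : forall j x, (j < k0)%nat ->
     derivable_pt_lim (fun t => skn x (theta j) (v j) t) (m j) (dm j x)) :
  (exists a b c d : nat -> R,
     (exists j, (j < k0)%nat /\ (a j <> 0 \/ b j <> 0 \/ c j <> 0 \/ d j <> 0)) /\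
     negligible (fun x =>
       Rsum_upto k0 (fun j => a j * skn x (theta j) (v j) (m j)
                              + b j * dth j x + c j * dv j x + d j * dm j x) <> 0))
  <-> (P1 k0 m = 0 \/ P2 k0 theta v m = 0).
Proof.
  assert (Eth : forall j x, (j < k0)%nat -> dth j x = Dth x (theta j) (v j) (m j))
    by (intros; eapply uniqueness_limite; [apply hdth|apply dth_formula]; auto).
  assert (Ev : forall j x, (j < k0)%nat -> dv j x = Dv x (theta j) (v j) (m j))
    by (intros; eapply uniqueness_limite; [apply hdv|apply dv_formula]; auto).
  assert (Em : forall j x, (j < k0)%nat -> dm j x = Dm x (theta j) (v j) (m j))
    by (intros; eapply uniqueness_limite; [apply hdm|apply dm_formula]; auto).
  split.
  - intros [a [b [c [d [[j0 [hj0 hnz]] Hneg]]]]].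
    apply NNPP. intros Hno.
    assert (hm : forall j, (j < k0)%nat -> m j <> 0).
    { intros j hj h. apply Hno. left. unfold P1. apply prod_zero. exists j; auto. }
    assert (hcls : forall i j, (i < k0)%nat -> (j < k0)%nat -> i <> j -> theta i = theta j ->
               v i * (1 + m j^2) = v j * (1 + m i^2) -> False).
    { intros i j hi hj hij h1 h2. apply Hno. right. unfold P2. apply prod_zero. exists i. split; auto.
      apply prod_zero. exists j. split; auto. destruct (Nat.eqb_spec i j); [lia|]. rewrite h1, h2. ring. }
    assert (hrate : forall i j, (i < k0)%nat -> (j < k0)%nat ->
               (1 + m i ^ 2) / (2 * v i) = (1 + m j ^ 2) / (2 * v j) -> v i * (1 + m j^2) = v j * (1 + m i^2)).
    { intros i j hi hj h. generalize (hv i hi) (hv j hj); intros.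
      apply (Rmult_eq_compat_r (2 * v i * (2 * v j))) in h. field_simplify in h; [|lra|lra]. nra. }
    set (T := fun a b c d x => Rsum_upto k0 (fun j => a j * skn x (theta j) (v j) (m j) + b j * Dth x (theta j) (v j) (m j)
                                    + c j * Dv x (theta j) (v j) (m j) + d j * Dm x (theta j) (v j) (m j))).
    assert (HT : forall x, T a b c d x = 0).
    { apply negl_zero.
      - intros x. unfold T.
        apply (Rsum_cont k0 (fun j x => a j * skn x (theta j) (v j) (m j) + b j * Dth x (theta j) (v j) (m j)
                                    + c j * Dv x (theta j) (v j) (m j) + d j * Dm x (theta j) (v j) (m j))).
        intros j hj. apply cont_comb; auto.
      - eapply negl_mono. exact Hneg. intros x hx. unfold T in hx. intros h. apply hx.
        rewrite <- h. apply Rsum_ext. intros j hj. rewrite Eth, Ev, Em by auto. ring. }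
    destruct Mills as [lam Hlam].
    set (W := fun u => (Phi (- u) - lam) / phi u).
    assert (HWid : forall u, Phi (- u) = lam + phi u * W u).
    { intros u. unfold W. field. generalize (phi_pos u); lra. }
    assert (HW : HypW W).
    { intros t ht. destruct (Hlam t ht) as [l1 l2]. assert (hp := phi_pos t).
      assert (e : W t - S4 t = (Phi (- t) - lam - phi t * S4 t) / phi t) by (unfold W; field; lra).
      rewrite e. apply Rabs_le. split.
      - assert (0 <= (Phi (- t) - lam - phi t * S4 t) / phi t) by (unfold Rdiv; apply Rmult_le_pos; [lra|left; apply Rinv_0_lt_compat; lra]).
        assert (0 < 105 / t^9) by (apply Rdiv_lt_0_compat; [lra|apply pow_lt; lra]). lra.
      - apply (Rle_trans _ ((105 * phi t / t^9) / phi t)).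
        unfold Rdiv at 1 3. apply Rmult_le_compat_r; auto. left; apply Rinv_0_lt_compat; lra.
        right. field. split; try lra; apply pow_nonzero; lra. }
    assert (Hpos : forall j, (j < k0)%nat -> forall a b c d : R,
       (0 < tal (Gt (theta j) (v j) (m j) lam a b c d) /\ 0 < tmu (Gt (theta j) (v j) (m j) lam a b c d)) /\
       (0 < tal (Ht (theta j) (v j) (m j) a b c d) /\ 0 < tmu (Ht (theta j) (v j) (m j) a b c d))).
    { intros j hj a' b' c' d'. assert (hvj := hv j hj). assert (hs : 0 < sqrt (v j)) by (apply sqrt_lt_R0; auto).
      unfold Gt, Ht. cbn [tal tmu]. split; split.
      apply Rinv_0_lt_compat; lra. lra.
      apply Rdiv_lt_0_compat; [generalize (pow2_ge_0 (m j)); lra| lra].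
      apply Rdiv_lt_0_compat; auto. apply Rabs_pos_lt; auto. }
    assert (Hsame : forall i j, (i < k0)%nat -> (j < k0)%nat -> forall a1 b1 c1 d1 a2 b2 c2 d2 : R,
       same (Ht (theta i) (v i) (m i) a1 b1 c1 d1) (Ht (theta j) (v j) (m j) a2 b2 c2 d2) -> i = j).
    { intros i j hi hj a1 b1 c1 d1 a2 b2 c2 d2 [h1 h2]. unfold Ht in h1, h2. cbn [tal tth] in h1, h2.
      destruct (Nat.eq_dec i j); auto. exfalso. apply (hcls i j hi hj n h2). apply hrate; auto. }
    set (L1 := flat_map (fun j => [Gt (theta j) (v j) (m j) lam (a j) (b j) (c j) (d j);
                                   Ht (theta j) (v j) (m j) (a j) (b j) (c j) (d j)]) (seq 0 k0)).
    assert (HL1 : forall u, In u L1 -> exists j, (j < k0)%nat /\ (u = Gt (theta j) (v j) (m j) lam (a j) (b j) (c j) (d j) \/ u = Ht (theta j) (v j) (m j) (a j) (b j) (c j) (d j))).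
    { intros u hu. unfold L1 in hu. apply in_flat_map in hu as [j [hj hu]]. apply in_seq in hj.
      exists j. split; [lia|]. destruct hu as [<-|[<-|[]]]; auto. }
    destruct (mainL W HW (length L1) L1 (le_n _)) as [Haz _].
    { intros u hu. destruct (HL1 u hu) as [j [hj [->| ->]]]; apply (Hpos j hj). }
    { intros u w hu hw hs hu' hw'.
      destruct (HL1 u hu) as [i [hi [->| ->]]].
      { exfalso; apply hu'. unfold Gt, azero; cbn; auto. }
      destruct (HL1 w hw) as [j [hj [->| ->]]].
      { exfalso; apply hw'. unfold Gt, azero; cbn; auto. }
      assert (i = j) by (eapply Hsame; eauto). subst; auto. }
    { exists 0. intros x _. unfold L1. rewrite lsum_flat. transitivity (T a b c d x); [|apply HT]. unfold T. rewrite Rsum_list.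
      apply fold_ext_in. intros j hj. apply in_seq in hj. symmetry. apply term_identity; auto; try apply hv; try apply hm; lia. }
    assert (Zabc : forall j, (j < k0)%nat -> a j = 0 /\ b j = 0 /\ c j = 0).
    { intros j hj. assert (hin : In (Ht (theta j) (v j) (m j) (a j) (b j) (c j) (d j)) L1).
      { unfold L1. apply in_flat_map. exists j. split. apply in_seq; lia. right; left; auto. }
      destruct (Haz _ hin) as [z0 [z1 z2]]. unfold Ht in z0, z1, z2. cbn [ta0 ta1 ta2] in z0, z1, z2.
      assert (hvj := hv j hj). assert (hs : 0 < sqrt (v j)) by (apply sqrt_lt_R0; auto).
      assert (hsp : 0 < sp) by apply s2pi_pos.
      assert (hsg : sg (m j) <> 0) by (unfold sg; destruct (Rlt_dec 0 (m j)); lra).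
      assert (hk : sg (m j) / (sp * sp) <> 0) by (apply Rmult_integral_contrapositive; split; auto; apply Rinv_neq_0_compat; nra).
      apply Rmult_integral in z0 as [z0|z0]; [tauto|]. apply Rmult_integral in z1 as [z1|z1]; [tauto|].
      apply Rmult_integral in z2 as [z2|z2]; [tauto|].
      assert (ec : c j = 0).
      { unfold Rdiv in z2. apply Rmult_integral in z2 as [z2|z2]; auto. exfalso. revert z2. apply Rinv_neq_0_compat.
        apply Rmult_integral_contrapositive; split; [nra|lra]. }
      assert (eb : b j = 0).
      { unfold Rdiv in z1. apply Rmult_integral in z1 as [z1|z1]. lra. exfalso. revert z1. apply Rinv_neq_0_compat. nra. }
      rewrite ec in z0. unfold Rdiv in z0. rewrite Rmult_0_l, Rminus_0_r in z0.
      apply Rmult_integral in z0 as [z0|z0]. repeat split; auto; lra.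
      exfalso. revert z0. apply Rinv_neq_0_compat. lra. }
    set (H2 := fun j => Ht (theta j) (v j) (m j) 0 0 0 (d j)).
    set (L2 := map H2 (seq 0 k0)).
    assert (HL2 : forall u, In u L2 -> exists j, (j < k0)%nat /\ u = H2 j).
    { intros u hu. unfold L2 in hu. apply in_map_iff in hu as [j [<- hj]]. apply in_seq in hj. exists j; split; auto; lia. }
    assert (Hz2 : forall j, azero (H2 j)).
    { intros j. unfold H2, Ht, azero. cbn [ta0 ta1 ta2]. repeat split; unfold Rdiv; ring. }
    destruct (mainL W HW (length L2) L2 (le_n _)) as [_ Hq].
    { intros u hu. destruct (HL2 u hu) as [j [hj ->]]. apply (Hpos j hj). }
    { intros u w hu hw hs hu'. destruct (HL2 u hu) as [j [hj ->]]. exfalso; apply hu', Hz2. }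
    { exists 0. intros x _. unfold L2. rewrite lsum_map. transitivity (T a b c d x); [|apply HT]. unfold T. rewrite Rsum_list.
      apply fold_ext_in. intros j hj. apply in_seq in hj. destruct (Zabc j ltac:(lia)) as [ea [eb ec]].
      rewrite ea, eb, ec. rewrite term_identity with (lam := lam) (W := W); auto; try apply hv; try apply hm; try lia.
      unfold H2. rewrite tv_G0 by (apply hv; lia). ring. }
    assert (ed : d j0 = 0).
    { assert (hin : In (H2 j0) L2) by (unfold L2; apply in_map; apply in_seq; lia).
      destruct (Hq _ hin) as [_ [q1 _]].
      { intros w hw hs. destruct (HL2 w hw) as [j [hj ->]].
        assert (j0 = j) by (eapply Hsame; eauto). subst; auto. }
      unfold H2, Ht in q1. cbn [tq1] in q1.
      assert (hvj := hv j0 hj0). assert (hs : 0 < sqrt (v j0)) by (apply sqrt_lt_R0; auto).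
      assert (hsp : 0 < sp) by apply s2pi_pos.
      set (s := sqrt (v j0)) in *.
      assert (E : (- 0 * m j0 / (v j0 * s) + 2 * d j0 / s) / s / (sp * sp) = d j0 * (2 / (s * s * (sp * sp)))).
      { field. repeat split; lra. }
      rewrite E in q1. apply Rmult_integral in q1 as [q1|q1]; auto. exfalso. revert q1.
      apply Rmult_integral_contrapositive. split. lra. apply Rinv_neq_0_compat.
      apply Rmult_integral_contrapositive. split; apply Rmult_integral_contrapositive; split; lra. }
    destruct (Zabc j0 hj0) as [ea [eb ec]]. lra.
  - intros [HP1|HP2].
    + apply prod_zero in HP1 as [j [hj hmj]].
      exists (fun _ => 0), (fun k => if Nat.eqb k j then - 2 * v j / (sqrt (v j) * sp) else 0),
             (fun _ => 0), (fun k => if Nat.eqb k j then 1 else 0).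
      split. exists j. split; auto. right; right; right. rewrite Nat.eqb_refl. lra.
      apply negl_empty. intros x hx. apply hx.
      rewrite (Rsum_ext _ _ (fun k => if Nat.eqb k j then 0 else 0)).
      { rewrite Rsum_single; auto. }
      intros k hk. destruct (Nat.eqb_spec k j) as [->|hne].
      * rewrite Eth, Em by auto. rewrite hmj.
        transitivity (- 2 * v j / (sqrt (v j) * sp) * Dth x (theta j) (v j) 0 + 1 * Dm x (theta j) (v j) 0).
        ring. apply m0_identity; auto.
      * ring.
    + unfold P2 in HP2. apply prod_zero in HP2 as [i [hi Hi]]. apply prod_zero in Hi as [j [hj Hij]].
      revert Hij; destruct (Nat.eqb_spec i j) as [->|hne]; intros Hij. lra.
      assert (g1 := pow2_ge_0 (theta i - theta j)).
      assert (g2 := pow2_ge_0 (v i * (1 + m j ^ 2) - v j * (1 + m i ^ 2))).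
      assert (e1 : (theta i - theta j)^2 = 0) by lra.
      assert (e2 : (v i * (1 + m j ^ 2) - v j * (1 + m i ^ 2))^2 = 0) by lra.

      assert (h1 : theta i = theta j) by nra.
      assert (h2 : v i * (1 + m j^2) = v j * (1 + m i^2)) by nra.
      exists (fun _ => 0), (fun _ => 0), (fun _ => 0),
             (fun k => if Nat.eqb k i then v i else if Nat.eqb k j then - v j else 0).
      split. exists i. split; auto. right; right; right. rewrite Nat.eqb_refl. generalize (hv i hi); lra.
      apply negl_empty. intros x hx. apply hx.
      rewrite (Rsum_ext _ _ (fun k => (if Nat.eqb k i then v i * Dm x (theta i) (v i) (m i) else 0)
                                     + (if Nat.eqb k j then - v j * Dm x (theta j) (v j) (m j) else 0))).
      { rewrite Rsum_plus, !Rsum_single by auto.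
        rewrite !Dm_closed by auto. rewrite h1.
        assert (hr : (1 + m i ^ 2) / (2 * v i) = (1 + m j ^ 2) / (2 * v j)).
        { generalize (hv i hi) (hv j hj). intros. apply (Rmult_eq_reg_r (2 * v i * (2 * v j))); [|nra]. field_simplify; [|lra|lra]. nra. }
        rewrite hr. field. generalize (hv i hi) (hv j hj) s2pi_pos. unfold sp. lra. }
      intros k hk. rewrite Em by auto.
      destruct (Nat.eqb_spec k i) as [->|hki].
      * destruct (Nat.eqb_spec i j); [lia|]. ring.
      * destruct (Nat.eqb_spec k j) as [->|hkj]; ring.
Qed.
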